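(* Pairwise statistical parity $PSP$ satisfies monotonicity but does not satisfy deepness. Here (for rankings $r$ of the full population $\mathcal D$, $n=|\mathcal D|$): monotonicity means that for every population $\mathcal D$, every ranking $r$ of $\mathcal D$ and positions $i<j$ with $r(i)\in G_0$, $r(j)\in G_1$ and $y(r(i))\le y(r(j))$, one has $PSP(r_{i\leftrightarrow j})>PSP(r)$; deepness means that for every population $\mathcal D$, every ranking $r$ of $\mathcal D$ and positions $i<j$ (with $j+1\le n$) such that $y(r(i))=y(r(j))$, $y(r(i+1))=y(r(j+1))$, and either ($r(i),r(j)\in G_0$ and $r(i+1),r(j+1)\in G_1$) or ($r(i),r(j)\in G_1$ and $r(i+1),r(j+1)\in G_0$), one has $|PSP(r)-PSP(r_{i\leftrightarrow i+1})|>|PSP(r)-PSP(r_{j\leftrightarrow j+1})|$.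
   Context: A population is a finite set $\mathcal{D}$ of candidates partitioned into two nonempty groups, a non-protected group $G_0$ and a protected group $G_1$; each candidate $d$ has a relevance score $y(d)\in\mathbb R$. A ranking of $\mathcal D$ is a bijection $r:\{1,\dots,n\}\to\mathcal D$, $n=|\mathcal D|$; $d\succ_r d'$ means $d$ is at a smaller position than $d'$; $r_{i\leftrightarrow j}$ is $r$ with the candidates at positions $i,j$ swapped. Pairwise statistical parity (defined only for rankings of the full population): $PSP(r)=\frac{|\{(d,d')\in G_0\times G_1: d'\succ_r d\}|-|\{(d,d')\in G_0\times G_1: d\succ_r d'\}|}{|G_0\times G_1|}$. *)

(* Defs.v *)
From HB Require Import structures.
From mathcomp Require Import all_boot all_order all_algebra.
From mathcomp Require Import reals.
Set Implicit Arguments. Unset Strict Implicit. Unset Printing Implicit Defensive.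
Import Order.TTheory GRing.Theory Num.Theory.
Local Open Scope ring_scope.

(* A population: a finite type T of candidates, with group membership
   [g : T -> bool] (g d = false : d in G0, non-protected;
   g d = true : d in G1, protected) and relevance scores y : T -> R. *)

(* A ranking of T: a bijection from positions 'I_n (0-based) onto T, n = #|T|. *)
Definition ranking (T : finType) (r : 'I_#|T| -> T) : Prop := bijective r.

Definition ranked_above (T : finType) (r : 'I_#|T| -> T) (d d' : T) : bool :=
  [exists i : 'I_#|T|, exists j : 'I_#|T|, [&& r i == d, r j == d' & (i < j)%N]].

Definition swap (T : finType) (r : 'I_#|T| -> T) (i j : 'I_#|T|) : 'I_#|T| -> T :=
  fun k => if k == i then r j else if k == j then r i else r k.

Definition PSP (R : realType) (T : finType) (g : T -> bool) (r : 'I_#|T| -> T) : R :=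
  ((#|[set p : T * T | [&& ~~ g p.1, g p.2 & ranked_above r p.2 p.1]]|%:R
    - #|[set p : T * T | [&& ~~ g p.1, g p.2 & ranked_above r p.1 p.2]]|%:R)
   / (#|[set p : T * T | ~~ g p.1 && g p.2]|)%:R).

Definition population (T : finType) (g : T -> bool) : Prop :=
  (exists d, ~~ g d) /\ (exists d, g d).

Definition monotone (R : realType) : Prop :=
  forall (T : finType) (g : T -> bool) (y : T -> R), population g ->
  forall r : 'I_#|T| -> T, ranking r ->
  forall i j : 'I_#|T|, (i < j)%N -> ~~ g (r i) -> g (r j) -> y (r i) <= y (r j) ->
  PSP R g (swap r i j) > PSP R g r.

Definition deep (R : realType) : Prop :=
  forall (T : finType) (g : T -> bool) (y : T -> R), population g ->
  forall r : 'I_#|T| -> T, ranking r ->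
  forall i j i1 j1 : 'I_#|T|, (i < j)%N ->
  val i1 = (val i).+1 -> val j1 = (val j).+1 ->
  y (r i) = y (r j) -> y (r i1) = y (r j1) ->
  ((~~ g (r i) /\ ~~ g (r j) /\ g (r i1) /\ g (r j1)) \/
   (g (r i) /\ g (r j) /\ ~~ g (r i1) /\ ~~ g (r j1))) ->
  `|PSP R g r - PSP R g (swap r i i1)| > `|PSP R g r - PSP R g (swap r j j1)|.

(* Main.v *)
Require Import Defs.
From HB Require Import structures.
From mathcomp Require Import all_boot all_order all_algebra reals.
From mathcomp Require Import zify ring lra.
Set Implicit Arguments. Unset Strict Implicit. Unset Printing Implicit Defensive.
Import Order.TTheory GRing.Theory Num.Theory.
Local Open Scope ring_scope.

Section S.
Variables (T : finType) (g : T -> bool).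
Local Notation n := #|T|.

Definition Aset (f : 'I_n -> T) :=
  [set p : T * T | [&& ~~ g p.1, g p.2 & ranked_above f p.2 p.1]].
Definition Bset (f : 'I_n -> T) :=
  [set p : T * T | [&& ~~ g p.1, g p.2 & ranked_above f p.1 p.2]].
Definition Cset := [set p : T * T | ~~ g p.1 && g p.2].

Lemma rankE (f : 'I_n -> T) h d d' : cancel f h -> cancel h f ->
  ranked_above f d d' = (h d < h d')%N.
Proof.
move=> fK hK; apply/existsP/idP => [[k /existsP [l /and3P [/eqP <- /eqP <- kl]]]|lt].
  by rewrite !fK.
by exists (h d); apply/existsP; exists (h d'); rewrite !hK !eqxx.
Qed.

Definition tr (i j k : 'I_n) := if k == i then j else if k == j then i else k.

Definition tn (i j k : nat) := if k == i then j else if k == j then i else k.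

Lemma tnK i j k : tn i j (tn i j k) = k.
Proof. rewrite /tn; case: (k =P i) => /= ?; case: (k =P j) => /= ?; repeat (case: eqP => /= ?); lia. Qed.

Lemma ar1 i j k l : (i < j)%N -> k <> j -> l <> i -> (l < k)%N -> (tn i j l < tn i j k)%N.
Proof. rewrite /tn; repeat (case: eqP => /= ?); lia. Qed.

Lemma ar2 i j : (i < j)%N -> (tn i j j < tn i j i)%N.
Proof. rewrite /tn; repeat (case: eqP => /= ?); lia. Qed.

Lemma ar3 i j k l : j = i.+1 -> k <> j -> l <> i -> (tn i j l < tn i j k)%N ->
  (k = i /\ l = j) \/ (l < k)%N.
Proof. rewrite /tn; repeat (case: eqP => /= ?); lia. Qed.

Lemma tval i j k : nat_of_ord (tr i j k) = tn i j k.
Proof.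
rewrite /tr /tn; case: (eqVneq k i) => [->|ki]; first by rewrite eqxx.
case: (eqVneq k j) => [->|kj]; first by rewrite eqxx; case: eqP.
by rewrite !val_eqE (negbTE ki) (negbTE kj).
Qed.

Lemma trK i j : involutive (tr i j).
Proof. by move=> k; apply: ord_inj; rewrite !tval tnK. Qed.

Lemma swapE (r : 'I_n -> T) i j k : swap r i j k = r (tr i j k).
Proof. by rewrite /swap /tr; case: (k == i); case: (k == j). Qed.

Lemma swapK (r : 'I_n -> T) h (i j : 'I_n) : cancel r h -> cancel h r ->
  cancel (swap r i j) (tr i j \o h) /\ cancel (tr i j \o h) (swap r i j).
Proof.
by move=> rK hK; split => x /=; rewrite swapE ?rK ?trK ?hK.
Qed.

Lemma PSPE (R : realType) f h : cancel f h -> cancel h f ->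
  PSP R g f = (2 * #|Aset f|%:R - #|Cset|%:R) / #|Cset|%:R.
Proof.
move=> fK hK.
have H : (#|Aset f| + #|Bset f| = #|Cset|)%N.
  rewrite -cardsUI.
  have -> : Aset f :&: Bset f = set0.
    apply/setP => [[a b]]; rewrite !inE /= !(rankE _ _ fK hK).
    apply/negP => /andP [/and3P [_ _ l1] /and3P [_ _ l2]]; lia.
  have -> : Aset f :|: Bset f = Cset.
    apply/setP => [[a b]]; rewrite !inE /= !(rankE _ _ fK hK).
    case ga: (g a) => //=; case gb: (g b) => //=.
    case: ltngtP => // /val_inj E.
    by move: ga; rewrite -(hK a) -E hK gb.
  by rewrite cards0 addn0.
rewrite /PSP -/(Aset f) -/(Bset f) -/Cset -H natrD; congr (_ / _); ring.
Qed.

Lemma A_proper (r : 'I_n -> T) h (i j : 'I_n) : cancel r h -> cancel h r ->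
  (i < j)%N -> ~~ g (r i) -> g (r j) -> Aset r \proper Aset (swap r i j).
Proof.
move=> rK hK ij gi gj; have [sK sK'] := swapK i j rK hK.
apply/properP; split.
  apply/subsetP => [[a b]]; rewrite !inE /= (rankE _ _ rK hK) (rankE _ _ sK sK') /=.
  move/and3P=> [ga gb lt]; rewrite ga gb /=.
  rewrite -(hK a) in ga; rewrite -(hK b) in gb.
  have kj : nat_of_ord (h a) <> j by move/ord_inj => E; move: ga; rewrite E gj.
  have li : nat_of_ord (h b) <> i by move/ord_inj => E; move: gb; rewrite E (negbTE gi).
  by rewrite !tval; apply: ar1.
exists (r i, r j); rewrite !inE /= ?(rankE _ _ rK hK) ?(rankE _ _ sK sK') /= gi gj /=.
  by rewrite !rK !tval ar2.
by rewrite !rK -leqNgt ltnW.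
Qed.

Lemma A_adj (r : 'I_n -> T) h (i j : 'I_n) : cancel r h -> cancel h r ->
  val j = (val i).+1 -> ~~ g (r i) -> g (r j) ->
  #|Aset (swap r i j)| = (#|Aset r|).+1.
Proof.
move=> rK hK ij gi gj; have [sK sK'] := swapK i j rK hK.
have ij' : (i < j)%N by rewrite ij.
have P := A_proper rK hK ij' gi gj.
have nin : (r i, r j) \notin Aset r.
  by rewrite !inE /= (rankE _ _ rK hK) !rK /= gi gj /= -leqNgt ltnW.
have -> : Aset (swap r i j) = (r i, r j) |: Aset r.
  apply/eqP; rewrite eqEsubset; apply/andP; split; last first.
    rewrite subUset (proper_sub P) andbT sub1set.
    by rewrite !inE /= (rankE _ _ sK sK') /= !rK gi gj /= !tval ar2.
  apply/subsetP => [[a b]]; rewrite !inE /= (rankE _ _ rK hK) (rankE _ _ sK sK') /=.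
  move/and3P=> [ga gb lt]; rewrite ga gb /=.
  rewrite -(hK a) in ga; rewrite -(hK b) in gb.
  have kj : nat_of_ord (h a) <> j by move/ord_inj => E; move: ga; rewrite E gj.
  have li : nat_of_ord (h b) <> i by move/ord_inj => E; move: gb; rewrite E (negbTE gi).
  move: lt; rewrite !tval => /(ar3 ij kj li) [[E1 E2]|->]; last by rewrite orbT.
  by rewrite -(hK a) -(hK b) (ord_inj E1) (ord_inj E2) eqxx.
by rewrite cardsU1 nin.
Qed.

End S.

Lemma Cpos (T : finType) (g : T -> bool) : population g -> (0 < #|Cset g|)%N.
Proof.
move=> [[d0 g0] [d1 g1]]; apply/card_gt0P; exists (d0, d1).
by rewrite inE /= g0 g1.
Qed.

Theorem theorem11 (R : realType) : monotone R /\ ~ deep R.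
Proof.
split.
  move=> T g y pop r [h rK hK] i j ij gi gj _.
  have [sK sK'] := swapK i j rK hK.
  rewrite (PSPE g R sK sK') (PSPE g R rK hK).
  have cp := Cpos pop.
  have lt := proper_card (A_proper rK hK ij gi gj).
  rewrite ltr_pM2r ?invr_gt0 ?ltr0n //.
  have : (#|Aset g r|%:R < #|Aset g (swap r i j)|%:R :> R) by rewrite ltr_nat.
  lra.
move=> D.
pose T := 'I_4.
pose g := fun k : T => odd k.
pose r : 'I_#|T| -> T := cast_ord (card_ord 4).
pose h : T -> 'I_#|T| := cast_ord (esym (card_ord 4)).
have rK : cancel r h by move=> x; rewrite /r /h cast_ordK.
have hK : cancel h r by move=> x; rewrite /r /h cast_ordKV.
have pop : population g by split; [exists (inord 0) | exists (inord 1)]; rewrite /g inordK.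
have := D T g (fun _ => 0) pop r (Bijective rK hK)
  (h (inord 0)) (h (inord 2)) (h (inord 1)) (h (inord 3)).
have [H1 H2 H3] : [/\ (h (inord 0) < h (inord 2))%N,
   val (h (inord 1)) = (val (h (inord 0))).+1 &
   val (h (inord 3)) = (val (h (inord 2))).+1] by rewrite /h /= !inordK.
have G : ~~ g (r (h (inord 0))) /\ ~~ g (r (h (inord 2))) /\
   g (r (h (inord 1))) /\ g (r (h (inord 3))) by rewrite !hK /g !inordK.
move=> /(_ H1 H2 H3 erefl erefl (or_introl G)).
case: G => [g0 [g2 [g1 g3]]].
have [s1K s1K'] := swapK (h (inord 0)) (h (inord 1)) rK hK.
have [s2K s2K'] := swapK (h (inord 2)) (h (inord 3)) rK hK.
rewrite (PSPE g R s1K s1K') (PSPE g R s2K s2K').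
by rewrite (A_adj rK hK H2 g0 g1) (A_adj rK hK H3 g2 g3) ltxx.
Qed.
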